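(* Each of the following three rules produces integers $\mathsf t_i,\mathsf p_i\in\{0,\dots,255\}$ such that the case of $(\mathsf t_i,\mathsf p_i)$ with respect to base $256$ equals the case of $(A_i,B_i)$ with respect to the limb base $b$. (1) Native radix: $b=2^{64}$, $0\le A_i,B_i<2^{64}$, $D_i=(A_i+B_i)\bmod 2^{64}$, $G_i=\mathrm{popcnt}(D_i)$, $m_i=1$ if $D_i<A_i$ and $m_i=0$ otherwise, $\mathsf t_i=G_i+65m_i$, $\mathsf p_i=191$. (2) Reduced radix $2^k$ (first rule): $1\le k\le 63$, $b=2^k$, $0\le A_i,B_i<2^k$, $D_i=A_i+B_i$, $G_i=\mathrm{popcnt}(D_i)$, $m_i=1$ if $D_i\ge 2^k$ and $m_i=0$ otherwise, $\mathsf t_i=G_i+65m_i$, $\mathsf p_i=255-k$. (3) Reduced radix $2^k$ (second rule): $1\le k\le 63$, $b=2^k$, $0\le A_i,B_i<2^k$, $D_i=A_i+B_i$, $G_i=\min(D_i+2^{64}-2^k-1,\,2^{64}-1)$, $\mathsf t_i=\max(G_i-(2^{64}-3),\,0)$, $\mathsf p_i=254$.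
   Context: $\mathrm{popcnt}(x)$ is the number of ones in the binary representation of the nonnegative integer $x$. For a base $b\ge2$ and integers $0\le x,y<b$, the case of $(x,y)$ with respect to base $b$ is $\mathbf N$ if $x+y\le b-2$, $\mathbf P$ if $x+y=b-1$, and $\mathbf G$ if $x+y\ge b$. *)

(* Defs.v *)
From mathcomp Require Import all_boot.
Set Implicit Arguments. Unset Strict Implicit. Unset Printing Implicit Defensive.

(* popcnt x = number of ones in the binary representation of x.
   Bit i of x is odd (x %/ 2^i); all bits of index >= x vanish since x < 2^x,
   so summing over i < x.+1 counts every one bit. *)
Definition popcnt (x : nat) : nat := \sum_(i < x.+1) odd (x %/ 2 ^ i).

Inductive digit_case := CaseN | CaseP | CaseG.

Definition case_of (b x y : nat) : digit_case :=
  if x + y <= b - 2 then CaseN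
  else if x + y == b - 1 then CaseP
  else CaseG.

(* Main.v *)
Require Import Defs.
From mathcomp Require Import all_boot.
From mathcomp Require Import zify.

Definition pc n x := \sum_(i < n) odd (x %/ 2 ^ i).

Lemma pc_S n x : pc n.+1 x = odd x + pc n x./2.
Proof.
rewrite /pc big_ord_recl /= expn0 divn1; congr (_ + _).
apply: eq_bigr => i _; rewrite /bump /= add1n expnS divnMA divn2 //.
Qed.

Lemma pc_ext n m x : x < 2 ^ n -> pc (n + m) x = pc n x.
Proof.
move=> hx; rewrite /pc big_split_ord /= [X in _ + X = _]big1 ?addn0 //.
move=> i _; rewrite divn_small //; apply: leq_trans hx _.
by rewrite leq_exp2l // leq_addr.
Qed.

Lemma popcnt_pc n x : x < 2 ^ n -> popcnt x = pc n x.
Proof.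
move=> hx; rewrite /popcnt -/(pc x.+1 x).
have hx' : x < 2 ^ x.+1 by apply: leq_trans (ltn_expl x (isT : 1 < 2)) _; rewrite leq_exp2l.
by rewrite -(pc_ext x.+1 n x hx') -(pc_ext n x.+1 x hx) addnC.
Qed.

Lemma pc_facts n x : x < 2 ^ n ->
  pc n x <= n /\ (pc n x = n -> x = 2 ^ n - 1) /\ (x = 2 ^ n - 1 -> pc n x = n).
Proof.
elim: n x => [|n IH] x hx.
  by rewrite /pc big_ord0 expn0; split=> //; split=> //; lia.
have hx2 : x./2 < 2 ^ n by move: hx; rewrite expnS; lia.
have [h1 [h2 h3]] := IH _ hx2.
have ho := odd_double_half x.
have e : 2 ^ n.+1 = 2 * 2 ^ n by rewrite expnS.
rewrite pc_S e; move: h1 h2 h3 ho hx; rewrite e.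
move: (pc n x./2) (2 ^ n) => P X; case: (odd x) => /= h1 h2 h3 ho hx.
  split; first lia. split.
    move=> hP; have := h2 ltac:(lia); lia.
  move=> hxe; have := h3 ltac:(lia); lia.
split; first lia. split.
  move=> hP; lia.
move=> hxe; exfalso; lia.
Qed.

Lemma popfacts n x : x < 2 ^ n ->
  popcnt x <= n /\ (popcnt x = n -> x = 2 ^ n - 1) /\ (x = 2 ^ n - 1 -> popcnt x = n).
Proof. by move=> hx; rewrite (popcnt_pc n x hx); apply: pc_facts. Qed.

Theorem lemma1 :
  (* (1) native radix b = 2^64 *)
  (forall A B : nat, A < 2 ^ 64 -> B < 2 ^ 64 ->
     let D := (A + B) %% 2 ^ 64 in
     let G := popcnt D in
     let m := if D < A then 1 else 0 in
     let t := G + 65 * m in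
     let p := 191 in
     [/\ t <= 255, p <= 255 & case_of 256 t p = case_of (2 ^ 64) A B]) /\
  (* (2) reduced radix 2^k, first rule *)
  (forall k A B : nat, 1 <= k <= 63 -> A < 2 ^ k -> B < 2 ^ k ->
     let D := A + B in
     let G := popcnt D in
     let m := if 2 ^ k <= D then 1 else 0 in
     let t := G + 65 * m in
     let p := 255 - k in
     [/\ t <= 255, p <= 255 & case_of 256 t p = case_of (2 ^ k) A B]) /\
  (* (3) reduced radix 2^k, second rule *)
  (forall k A B : nat, 1 <= k <= 63 -> A < 2 ^ k -> B < 2 ^ k ->
     let D := A + B in
     let G := minn (D + 2 ^ 64 - 2 ^ k - 1) (2 ^ 64 - 1) in
     let t := maxn (G - (2 ^ 64 - 3)) 0 in
     let p := 254 in
     [/\ t <= 255, p <= 255 & case_of 256 t p = case_of (2 ^ k) A B]).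
Proof.
split; [|split].
- move=> A B hA hB; cbv zeta.
  have hD : (A + B) %% 2 ^ 64 < 2 ^ 64 by rewrite ltn_pmod ?expn_gt0.
  have [P1 [P2 P3]] := popfacts 64 _ hD.
  have hDe : (A + B) %% 2 ^ 64 = if A + B < 2 ^ 64 then A + B else A + B - 2 ^ 64.
    case: ifP => h; first by rewrite modn_small.
    have e : A + B = (A + B - 2 ^ 64) + 2 ^ 64 by move: h; lia.
    rewrite {1}e modnDr modn_small //; move: h hA hB; lia.
  move: P1 P2 P3 hDe hD.
  generalize (popcnt ((A + B) %% 2 ^ 64)) => P. generalize ((A + B) %% 2 ^ 64) => D.
  have h2 : 2 <= 2 ^ 64 by rewrite (leq_exp2l 1).
  move: hA hB h2; move: (2 ^ 64) => X hA hB h2 P1 P2 P3 hDe hD.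
  rewrite /case_of; split => //.
    case: ifP => _; lia.
  idtac.
  move: hDe; case: ifP => h1 hDe; repeat case: ifP; try done; intros; move: h1; lia.
- move=> k A B hk hA hB; cbv zeta.
  have hD : A + B < 2 ^ k.+1 by rewrite expnS; lia.
  have [P1 [P2 P3]] := popfacts k.+1 _ hD.
  have hD' : A + B < 2 ^ k -> popcnt (A + B) <= k /\ (popcnt (A + B) = k -> A + B = 2 ^ k - 1) /\ (A + B = 2 ^ k - 1 -> popcnt (A + B) = k).
    by move=> h; apply: popfacts.
  move: P1 P2 P3 hD hD'; rewrite expnS.
  have h2 : 2 <= 2 ^ k by rewrite (leq_exp2l 1); lia.
  generalize (popcnt (A + B)) => P; move: hA hB h2; move: (2 ^ k) => X hA hB h2 P1 P2 P3 hD hD'.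
  rewrite /case_of; split.
    case: ifP => _; lia.
    lia.
  case: (ltnP (A + B) X) => h.
    have [Q1 [Q2 Q3]] := hD' h.
    repeat case: ifP; try done; intros; lia.
  repeat case: ifP; try done; intros; lia.
- move=> k A B hk hA hB; cbv zeta.
  have hX : 2 ^ k < 2 ^ 64 by rewrite ltn_exp2l //; lia.
  have h2 : 2 <= 2 ^ k by rewrite (leq_exp2l 1); lia.
  move: hA hB hX h2; move: (2 ^ k) (2 ^ 64) => X Y hA hB hX h2.
  rewrite /case_of; split => //.
    lia.
  repeat case: ifP; try done; intros; lia.
Qed.
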